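(* Consider the following setting. Let $\mathcal{Z}=\mathcal{Z}_1\times\cdots\times\mathcal{Z}_N\subset\mathbb{R}^n$ be a product of nonempty convex compact sets, and for each $i$ let $C_i:\mathcal{Z}_i\to\mathbb{R}$ be twice differentiable with $\nabla^2 C_i(z_i)\succeq\sigma_c I$ for some $\sigma_c>0$ and with Lipschitz continuous gradient on $\mathcal{Z}_i$. Let $g(z)=Rz+g_0$ be an affine map $\mathbb{R}^n\to\mathbb{R}^m$ with $\|R\|_F\le\sigma_g$, $\sigma_g>0$, and assume the convex problem $\min\{\sum_i C_i(z_i): z\in\mathcal{Z},\ g(z)\le 0\}$ satisfies Slater's condition. Fix $\phi>0$, let $\mathcal{L}(z,\mu)=\sum_i C_i(z_i)+\mu^\top g(z)-\frac{\phi}{2}\|\mu\|^2$, $h(\mu)=\min_{z\in\mathcal{Z}}\mathcal{L}(z,\mu)$, let $(z^*,\mu^* )$ be the unique saddle point of $\mathcal{L}$ over $\mathcal{Z}\times\mathbb{R}^m_{\ge0}$, and let $\sigma_h>0$ satisfy $(\nabla h(\mu)-\nabla h(\tilde\mu))^\top(\mu-\tilde\mu)\le-\sigma_h\|\mu-\tilde\mu\|^2$ for all $\mu,\tilde\mu\ge0$. Suppose there are no discrete decision variables, so the algorithm is the deterministic dual gradient method: from $\mu(1)\ge0$, $z(k+1)=\arg\min_{z\in\mathcal{Z}}\mathcal{L}(z,\mu(k))$ and $\mu(k+1)=[\mu(k)+\varepsilon(g(z(k+1))-\phi\mu(k))]_+$. If $0<\varepsilon<2\sigma_h/(\sigma_g^2/\sigma_c+\phi)^2$,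 then $\lim_{k\to\infty}\|\mu(k)-\mu^*\|^2=0$ and $\lim_{k\to\infty}\|z(k)-z^*\|^2=0$.
   Context: $[\cdot]_+$ denotes componentwise projection onto the nonnegative orthant; $\|\cdot\|$ is the Euclidean norm and $\|\cdot\|_F$ the Frobenius norm. *)

(* Defs.v *)
From HB Require Import structures.
From mathcomp Require Import all_boot all_order all_algebra.
From mathcomp Require Import all_classical all_reals all_analysis.
Set Implicit Arguments. Unset Strict Implicit. Unset Printing Implicit Defensive.
Import Order.TTheory GRing.Theory Num.Theory.
Import numFieldNormedType.Exports.
Local Open Scope classical_set_scope.
Local Open Scope ring_scope.

Section Defs.
Variable R : realType.

(* Euclidean geometry on row vectors 'rV[R]_k (the library norm on matrices
   is the max norm, so the Euclidean quantities are written out). *)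
Definition dotr k (u v : 'rV[R]_k) : R := \sum_(j < k) u 0 j * v 0 j.
Definition sqnorm k (v : 'rV[R]_k) : R := \sum_(j < k) v 0 j ^+ 2.
Definition enorm k (v : 'rV[R]_k) : R := Num.sqrt (sqnorm v).
Definition nonneg k (v : 'rV[R]_k) : Prop := forall j, 0 <= v 0 j.
Definition projpos k (v : 'rV[R]_k) : 'rV[R]_k := \row_j Num.max (v 0 j) 0.
Definition frob2 p q (A : 'M[R]_(p, q)) : R := \sum_(a < p) \sum_(b < q) A a b ^+ 2.

Definition cvxset k (S : set 'rV[R]_k) : Prop :=
  forall x y (t : R), S x -> S y -> 0 <= t <= 1 -> S (t *: x + (1 - t) *: y).

Definition grad k (f : 'rV[R]_k -> R) (x : 'rV[R]_k) : 'rV[R]_k :=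
  \row_j ('D_(delta_mx 0 j) f x).

Definition twice_diff_on k (S : set 'rV[R]_k) (f : 'rV[R]_k -> R) : Prop :=
  exists U : set 'rV[R]_k, [/\ open U, S `<=` U &
    forall x, U x -> differentiable f x /\ forall v, differentiable ('D_v f) x].

(* Hessian >= s I on S :  v^T (Hess f x) v >= s |v|^2 *)
Definition hess_ge k (S : set 'rV[R]_k) (f : 'rV[R]_k -> R) (s : R) : Prop :=
  forall x v, S x -> s * sqnorm v <= 'D_v ('D_v f) x.

Definition lip_grad_on k (S : set 'rV[R]_k) (f : 'rV[R]_k -> R) : Prop :=
  exists L : R, forall x y, S x -> S y ->
    enorm (grad f x - grad f y) <= L * enorm (x - y).

Variables (N : nat) (ns : 'I_N -> nat) (m : nat).
Definition blockvec := forall i : 'I_N, 'rV[R]_(ns i).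

Definition inZ (Zs : forall i, set 'rV[R]_(ns i)) (z : blockvec) : Prop :=
  forall i, Zs i (z i).
Definition zdist2 (z z' : blockvec) : R := \sum_(i < N) sqnorm (z i - z' i).
Definition cost (C : forall i, 'rV[R]_(ns i) -> R) (z : blockvec) : R :=
  \sum_(i < N) C i (z i).
(* g(z) = R z + g0, with R = [R_1 ... R_N] split into column blocks
   (row-vector convention: z_i *m Rb i) *)
Definition gfun (Rb : forall i, 'M[R]_(ns i, m)) (g0 : 'rV[R]_m) (z : blockvec)
  : 'rV[R]_m := \sum_(i < N) (z i *m Rb i) + g0.
Definition frobR (Rb : forall i, 'M[R]_(ns i, m)) : R :=
  Num.sqrt (\sum_(i < N) frob2 (Rb i)).

Definition Lagr C Rb g0 (phi : R) (z : blockvec) (mu : 'rV[R]_m) : R :=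
  cost C z + dotr mu (gfun Rb g0 z) - phi / 2 * sqnorm mu.

(* h(mu) = min_{z in Z} L(z, mu)  (the inf is attained: Z compact, L continuous) *)
Definition hdual Zs C Rb g0 phi (mu : 'rV[R]_m) : R :=
  inf [set y | exists2 z, inZ Zs z & y = Lagr C Rb g0 phi z mu].

Definition saddle Zs C Rb g0 phi (zs : blockvec) (mus : 'rV[R]_m) : Prop :=
  [/\ inZ Zs zs, nonneg mus &
     forall z mu, inZ Zs z -> nonneg mu ->
       Lagr C Rb g0 phi zs mu <= Lagr C Rb g0 phi zs mus /\
       Lagr C Rb g0 phi zs mus <= Lagr C Rb g0 phi z mus].

Definition slater Zs Rb g0 : Prop :=
  exists2 z, inZ Zs z & forall j, gfun Rb g0 z 0 j < 0.
End Defs.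

(* Main.v *)
Require Import Defs.
From HB Require Import structures.
From mathcomp Require Import all_boot all_order all_algebra.
From mathcomp Require Import all_classical all_reals all_analysis.
Import Order.TTheory GRing.Theory Num.Theory.
Import numFieldNormedType.Exports.
Local Open Scope classical_set_scope.
Local Open Scope ring_scope.

From mathcomp Require Import ring lra.


Section OneD.
Variable R : realType.

Lemma sq_derive (k x : R) : is_derive x 1 (fun y : R => k / 2 * (y * y)) (k * x).
Proof.
have h : is_derive x 1 (fun y : R => y * y) (x *: 1 + x *: 1).
  exact: (@is_deriveM _ _ (@id R) (@id R) x 1 1 1).
have h2 := is_deriveZ (k/2) h.
have h3 : is_derive x 1 (fun y : R => k / 2 * (y * y)) ((k/2) *: (x *: 1 + x *: 1)) := h2.
apply: (is_derive_eq h3).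
rewrite /GRing.scale /=; lra.
Qed.

Lemma itv_in01 (a b x : R) : 0 <= a -> b <= 1 -> x \in `]a, b[ -> 0 <= x <= 1.
Proof. by move=> a0 b1; rewrite in_itv /= => /andP[? ?]; apply/andP; split; lra. Qed.

Lemma slope1 (f df ddf : R -> R) (k t : R) :
  (forall x : R, 0 <= x <= 1 -> is_derive x 1 f (df x)) ->
  (forall x : R, 0 <= x <= 1 -> is_derive x 1 df (ddf x)) ->
  (forall x : R, 0 <= x <= 1 -> k <= ddf x) ->
  0 < t <= 1 ->
  (f t - f 0) / t + k * (1 - t) / 2 <= f 1 - f 0.
Proof.
move=> hdf hddf hk /andP[t0 t1].
pose p x := f x - k / 2 * (x * x).
pose dp x := df x - k * x.
have pd (x : R) : 0 <= x <= 1 -> is_derive x 1 p (dp x).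
  move=> hx.
  have e : p = f - (fun y : R => k / 2 * (y * y)) by apply: funext.
  rewrite e /dp; apply: is_deriveB; last exact: sq_derive.
  exact: hdf x hx.
have dpd (x : R) : 0 <= x <= 1 -> is_derive x 1 dp (ddf x - k).
  move=> hx.
  have e : dp = df - (fun y : R => k * y) by apply: funext.
  rewrite e; apply: is_deriveB; first exact: hddf x hx.
  have h4 := is_deriveZ k (is_derive_id x (1:R)).
  have h5 : is_derive x 1 (fun y : R => k * y) (k *: (1:R)) := h4.
  by apply: (is_derive_eq h5); rewrite /GRing.scale /= mulr1.
have pcont (a b : R) : 0 <= a -> b <= 1 -> {within `[a, b], continuous p}.
  move=> a0 b1; apply: derivable_within_continuous => x.
  rewrite in_itv /= => /andP[ax xb].
  have hx : 0 <= x <= 1 by apply/andP; split; lra.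
  by have [] := pd x hx.
have dpcont (a b : R) : 0 <= a -> b <= 1 -> {within `[a, b], continuous dp}.
  move=> a0 b1; apply: derivable_within_continuous => x.
  rewrite in_itv /= => /andP[ax xb].
  have hx : 0 <= x <= 1 by apply/andP; split; lra.
  by have [] := dpd x hx.
have mono (a b : R) : 0 <= a -> a < b -> b <= 1 -> dp a <= dp b.
  move=> a0 ab b1.
  have [c] := MVT ab (fun x hx => dpd x (itv_in01 _ _ _ a0 b1 hx)) (dpcont a b a0 b1).
  move=> hc e.
  have hc01 := itv_in01 _ _ _ a0 b1 hc.
  have := hk c hc01.
  nra.
have [->|tl1] := eqVneq t 1.
  by rewrite divr1; lra.
have tl : t < 1 by rewrite lt_neqAle tl1 t1.
have [eta he e1] := MVT t0 (fun x hx => pd x (itv_in01 _ _ _ (lexx 0) t1 hx)) (pcont 0 t (lexx 0) t1).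
have [xi hx e2] := MVT tl (fun x hx => pd x (itv_in01 _ _ _ (ltW t0) (lexx 1) hx)) (pcont t 1 (ltW t0) (lexx 1)).
move: he hx; rewrite !in_itv /= => /andP[e0 et] /andP[tx x1].
have := mono eta xi (ltW e0) (lt_trans et tx) (ltW x1).
move: e1 e2; rewrite /p => e1 e2 hm.
have q : (f t - f 0) / t = dp eta + k * t / 2.
  apply: (@mulIf _ t); first by rewrite gt_eqF.
  rewrite mulfVK; last by rewrite gt_eqF.
  have -> : f t - f 0 = (f t - k / 2 * (t * t) - (f 0 - k / 2 * (0 * 0))) + k / 2 * (t * t) by ring.
  rewrite e1; ring.
rewrite q.
nra.
Qed.

Lemma lim_le (c D : R) : (forall t : R, 0 < t <= 1 -> (1 - t) * c <= D) -> c <= D.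
Proof.
move=> h.
have D0' : 0 <= D.
  have := h 1; rewrite ltr01 lexx subrr mul0r; apply; done.
case: (lerP c D) => // cD.
have c0 : 0 < c by lra.
pose t := (c - D) / (2 * c).
have t0 : 0 < t by rewrite /t divr_gt0 //; lra.
have t1 : t <= 1/2.
  rewrite /t ler_pdivrMr; last lra.
  lra.
have := h t; rewrite t0 /=.
have -> : t <= 1 by lra.
move=> /(_ isT).
have e : (1 - t) * c = c - (c - D) / 2.
  rewrite /t; field; lra.
rewrite e; lra.
Qed.

End OneD.

Section Line.
Variables (R : realType) (V : normedModType R).

Lemma line_derive (F : V -> R) (a v : V) (s : R) :
  derivable F (s *: v + a) v ->
  is_derive s 1 (fun r : R => F (r *: v + a)) ('D_v F (s *: v + a)).
Proof.
move=> hd.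
have E : (fun h : R => h^-1 *: (((fun r : R => F (r *: v + a)) \o shift s) (h *: 1) - F (s *: v + a)))
  = (fun h : R => h^-1 *: ((F \o shift (s *: v + a)) (h *: v) - F (s *: v + a))).
  apply: funext => h /=.
  by rewrite scalerDl addrA -[h *: 1]/(h * 1) mulr1.
split.
  by rewrite /derivable E.
by rewrite /derive E.
Qed.
End Line.



Section Dot.
Variable R : realType.
Lemma dotrB k (mu x y : 'rV[R]_k) : dotr mu x - dotr mu y = dotr mu (x - y).
Proof. by rewrite /dotr -sumrB; apply: eq_bigr => j _; rewrite !mxE mulrBr. Qed.
Lemma dotrD k (mu x y : 'rV[R]_k) : dotr mu (x + y) = dotr mu x + dotr mu y.
Proof. by rewrite /dotr -big_split; apply: eq_bigr => j _; rewrite !mxE mulrDr. Qed.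
Lemma dotrZ k (mu x : 'rV[R]_k) (t : R) : dotr mu (t *: x) = t * dotr mu x.
Proof. by rewrite /dotr mulr_sumr; apply: eq_bigr => j _; rewrite !mxE mulrCA. Qed.
Lemma dotr_sum k n (mu : 'rV[R]_k) (F : 'I_n -> 'rV[R]_k) :
  dotr mu (\sum_(i < n) F i) = \sum_(i < n) dotr mu (F i).
Proof.
rewrite /dotr exchange_big /=; apply: eq_bigr => j _.
by rewrite summxE mulr_sumr.
Qed.
End Dot.

Section Growth.
Variables (R : realType) (N : nat) (ns : 'I_N -> nat) (m : nat)
  (Zs : forall i : 'I_N, set 'rV[R]_(ns i))
  (C : forall i : 'I_N, 'rV[R]_(ns i) -> R)
  (Rb : forall i : 'I_N, 'M[R]_(ns i, m)) (g0 : 'rV[R]_m) (phi : R).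

Lemma Lagr_diff (mu : 'rV[R]_m) (z' z0 : blockvec R ns) :
  Lagr C Rb g0 phi z' mu - Lagr C Rb g0 phi z0 mu =
  \sum_i (C i (z' i) - C i (z0 i) + dotr mu ((z' i - z0 i) *m Rb i)).
Proof.
rewrite /Lagr /cost /gfun big_split /= sumrB.
have -> : \sum_(i < N) dotr mu ((z' i - z0 i) *m Rb i)
   = dotr mu (\sum_(i < N) z' i *m Rb i + g0) - dotr mu (\sum_(i < N) z0 i *m Rb i + g0).
  rewrite dotrB -dotr_sum; congr dotr.
  rewrite opprD addrACA subrr addr0 -sumrB.
  by apply: eq_bigr => i _; rewrite mulmxBl.
ring.
Qed.

Lemma growth (sc : R) :
  (forall i, cvxset (Zs i)) -> (forall i, twice_diff_on (Zs i) (C i)) ->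
  (forall i, hess_ge (Zs i) (C i) sc) ->
  forall (mu : 'rV[R]_m) (z0 : blockvec R ns), inZ Zs z0 ->
  (forall z', inZ Zs z' -> Lagr C Rb g0 phi z0 mu <= Lagr C Rb g0 phi z' mu) ->
  forall z, inZ Zs z ->
  Lagr C Rb g0 phi z0 mu + sc / 2 * zdist2 z z0 <= Lagr C Rb g0 phi z mu.
Proof.
move=> cvx td hg mu z0 Z0 zmin z Zz.
pose v i := z i - z0 i.
have seg i (s : R) : 0 <= s <= 1 -> Zs i (s *: v i + z0 i).
  move=> hs; have := cvx i (z i) (z0 i) s (Zz i) (Z0 i) hs.
  congr (Zs i _); rewrite /v scalerBr scalerBl scale1r -addrA [- _ + _]addrC.
  by rewrite addrA.
pose c i (s : R) := C i (s *: v i + z0 i).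
pose l i := dotr mu (v i *m Rb i).
have slope i (t : R) : 0 < t <= 1 -> (c i t - c i 0) / t + sc * sqnorm (v i) * (1 - t) / 2 <= c i 1 - c i 0.
  apply: (@slope1 _ (c i) (fun s => 'D_(v i) (C i) (s *: v i + z0 i))
      (fun s => 'D_(v i) ('D_(v i) (C i)) (s *: v i + z0 i))).
  - move=> x hx; apply: line_derive.
    have [U [_ sU dU]] := td i.
    by apply: diff_derivable; apply: (dU _ (sU _ (seg i x hx))).1.
  - move=> x hx; apply: (@line_derive _ _ ('D_(v i) (C i))).
    have [U [_ sU dU]] := td i.
    by apply: diff_derivable; apply: (dU _ (sU _ (seg i x hx))).2.
  - by move=> x hx; apply: hg; apply: seg.
have c0 i : c i 0 = C i (z0 i) by rewrite /c scale0r add0r.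
have c1 i : c i 1 = C i (z i) by rewrite /c scale1r /v subrK.
have H1 (t : R) : 0 < t <= 1 -> 0 <= \sum_i (c i t - c i 0 + t * l i).
  move=> ht.
  have Zt : inZ Zs (fun i => t *: v i + z0 i).
    by move=> i; apply: seg; case/andP: ht => a b; apply/andP; split => //; apply: ltW.
  have := zmin _ Zt; rewrite -subr_ge0 Lagr_diff.
  congr (0 <= _); apply: eq_bigr => i _.
  by rewrite c0 addrK /l -scalemxAl dotrZ.
have H2 : Lagr C Rb g0 phi z mu - Lagr C Rb g0 phi z0 mu = \sum_i (c i 1 - c i 0 + l i).
  by rewrite Lagr_diff; apply: eq_bigr => i _; rewrite c0 c1.
rewrite addrC -lerBrDr H2.
have -> : sc / 2 * zdist2 z z0 = \sum_i (sc / 2 * sqnorm (v i)).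
  by rewrite /zdist2 mulr_sumr.
apply: lim_le => t ht.
have t0 : 0 < t by case/andP: ht.
rewrite -(ler_pM2l t0) !mulr_sumr.
have := H1 t ht.
have key : \sum_i (t * ((1 - t) * (sc / 2 * sqnorm (v i))) + (c i t - c i 0 + t * l i))
   <= \sum_i t * (c i 1 - c i 0 + l i).
  apply: ler_sum => i _.
  have := slope i t ht.
  set q := (c i t - c i 0) / t.
  have e : c i t - c i 0 = q * t by rewrite /q divfK // gt_eqF.
  move=> hq; rewrite addrA e.
  nra.
move: key; rewrite big_split /=; lra.
Qed.

Lemma sum_delta (j : 'I_m) (F : 'I_m -> R) :
  \sum_k (delta_mx 0 j : 'rV[R]_m) 0 k * F k = F j.
Proof.
rewrite (bigD1 j) //= big1 => [|k kj]; first by rewrite mxE !eqxx mul1r addr0.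
by rewrite mxE eqxx (negbTE kj) mul0r.
Qed.

Lemma Lagr_shift (z : blockvec R ns) (mu : 'rV[R]_m) (j : 'I_m) (t : R) :
  Lagr C Rb g0 phi z (t *: delta_mx 0 j + mu) =
  Lagr C Rb g0 phi z mu + t * gfun Rb g0 z 0 j - phi * t * mu 0 j - phi / 2 * t ^+ 2.
Proof.
rewrite /Lagr.
have -> : dotr (t *: delta_mx 0 j + mu) (gfun Rb g0 z) = dotr mu (gfun Rb g0 z) + t * gfun Rb g0 z 0 j.
  rewrite /dotr.
  have -> : \sum_(k < m) (t *: (delta_mx 0 j : 'rV[R]_m) + mu) 0 k * gfun Rb g0 z 0 k =
    \sum_(k < m) (mu 0 k * gfun Rb g0 z 0 k + t * ((delta_mx 0 j : 'rV[R]_m) 0 k * gfun Rb g0 z 0 k)).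
    by apply: eq_bigr => k _; rewrite !mxE; ring.
  by rewrite big_split /= -mulr_sumr sum_delta.
have -> : sqnorm (t *: delta_mx 0 j + mu) = sqnorm mu + (2 * t * mu 0 j + t ^+ 2).
  rewrite /sqnorm.
  have -> : \sum_(k < m) (t *: (delta_mx 0 j : 'rV[R]_m) + mu) 0 k ^+ 2 =
    \sum_(k < m) (mu 0 k ^+ 2 + (delta_mx 0 j : 'rV[R]_m) 0 k * (2 * t * mu 0 k + t ^+ 2)).
    apply: eq_bigr => k _; rewrite !mxE eqxx /=.
    by case: eqP => _ /=; ring.
  by rewrite big_split /= sum_delta.
by field.
Qed.

Lemma frob_bound (sg : R) (j : 'I_m) : frobR Rb <= sg ->
  \sum_i \sum_(k < ns i) Rb i k j ^+ 2 <= sg ^+ 2.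
Proof.
move=> hf.
have S0 : 0 <= \sum_(i < N) frob2 (Rb i).
  by apply: sumr_ge0 => i _; apply: sumr_ge0 => a _; apply: sumr_ge0 => b _; apply: sqr_ge0.
apply: (@le_trans _ _ (\sum_(i < N) frob2 (Rb i))).
  apply: ler_sum => i _; rewrite /frob2; apply: ler_sum => a _.
  rewrite (bigD1 j) //= lerDl.
  by apply: sumr_ge0 => b _; apply: sqr_ge0.
rewrite -(sqr_sqrtr S0).
have s0 : 0 <= Num.sqrt (\sum_(i < N) frob2 (Rb i)) by apply: sqrtr_ge0.
move: hf; rewrite /frobR => hf.
nra.
Qed.

Lemma gfun_diff (z z0 : blockvec R ns) (j : 'I_m) :
  gfun Rb g0 z 0 j - gfun Rb g0 z0 0 j =
  \sum_i \sum_(k < ns i) (z i - z0 i) 0 k * Rb i k j.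
Proof.
have E : gfun Rb g0 z - gfun Rb g0 z0 = \sum_i (z i - z0 i) *m Rb i.
  rewrite /gfun opprD addrACA subrr addr0 -sumrB.
  by apply: eq_bigr => i _; rewrite mulmxBl.
have := congr1 (fun M : 'rV[R]_m => M 0 j) E; rewrite /= !mxE summxE => ->.
by rewrite summxE; apply: eq_bigr => i _; rewrite mxE.
Qed.

Lemma cross_bound (sc sg t : R) (z z0 : blockvec R ns) (j : 'I_m) :
  0 < sc -> frobR Rb <= sg ->
  - (t ^+ 2 * sg ^+ 2 / (2 * sc)) <=
  sc / 2 * zdist2 z z0 + t * (gfun Rb g0 z 0 j - gfun Rb g0 z0 0 j).
Proof.
move=> sc0 hf.
rewrite gfun_diff /zdist2 /sqnorm mulr_sumr mulr_sumr -big_split /=.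
apply: (@le_trans _ _ (\sum_i \sum_(k < ns i) (- (t ^+ 2 / (2 * sc)) * Rb i k j ^+ 2))).
  have -> : \sum_i \sum_(k < ns i) (- (t ^+ 2 / (2 * sc)) * Rb i k j ^+ 2) =
     - (t ^+ 2 / (2 * sc)) * \sum_i \sum_(k < ns i) Rb i k j ^+ 2.
    by rewrite mulr_sumr; apply: eq_bigr => i _; rewrite mulr_sumr.
  have := frob_bound _ j hf.
  have p : 0 <= t ^+ 2 / (2 * sc) by apply: divr_ge0; [apply: sqr_ge0| lra].
  set S := \sum_i _ .
  move=> hS.
  have : t ^+ 2 / (2 * sc) * S <= t ^+ 2 / (2 * sc) * sg ^+ 2 by apply: ler_wpM2l.
  rewrite mulNr.
  have -> : t ^+ 2 * sg ^+ 2 / (2 * sc) = t ^+ 2 / (2 * sc) * sg ^+ 2 by rewrite mulrAC.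
  lra.
apply: ler_sum => i _.
rewrite mulr_sumr mulr_sumr -big_split /=.
apply: ler_sum => k _.
set d := (z i - z0 i) 0 k.
set r := Rb i k j.
have h : 0 <= (sc * d + t * r) ^+ 2 by apply: sqr_ge0.
have e : - (t ^+ 2 / (2 * sc)) * r ^+ 2 = sc / 2 * d ^+ 2 + t * (d * r) - (sc * d + t * r) ^+ 2 / (2 * sc).
  by field; lra.
rewrite e lerBlDr lerDl; apply: divr_ge0 => //; lra.
Qed.

Lemma inf_sandwich (S : set R) (lo y0 : R) :
  S y0 -> (forall y, S y -> lo <= y) -> lo <= inf S /\ inf S <= y0.
Proof.
move=> Sy lb; split.
  by apply: lb_le_inf; [exists y0 | move=> y Sy'; apply: lb].
by apply: ge_inf => //; exists lo => y Sy'; apply: lb.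
Qed.

Lemma zdist2_ge0 (z z0 : blockvec R ns) : 0 <= zdist2 z z0.
Proof. by apply: sumr_ge0 => i _; apply: sumr_ge0 => k _; apply: sqr_ge0. Qed.

Lemma hdual_at (mu : 'rV[R]_m) (z0 : blockvec R ns) : inZ Zs z0 ->
  (forall z, inZ Zs z -> Lagr C Rb g0 phi z0 mu <= Lagr C Rb g0 phi z mu) ->
  hdual Zs C Rb g0 phi mu = Lagr C Rb g0 phi z0 mu.
Proof.
move=> Z0 zmin.
pose S := [set y | exists2 z, inZ Zs z & y = Lagr C Rb g0 phi z mu].
have Sy : S (Lagr C Rb g0 phi z0 mu) by exists z0.
have lb : forall y, S y -> Lagr C Rb g0 phi z0 mu <= y by move=> y [z Zz ->]; apply: zmin.
have [lo up] := @inf_sandwich S _ _ Sy lb.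
by apply/eqP; rewrite eq_le; apply/andP; split.
Qed.

Lemma hdual_derive (sc sg : R) (mu : 'rV[R]_m) (z0 : blockvec R ns) (j : 'I_m) :
  0 < sc -> frobR Rb <= sg -> 0 <= phi -> inZ Zs z0 ->
  (forall z, inZ Zs z -> Lagr C Rb g0 phi z0 mu + sc / 2 * zdist2 z z0 <= Lagr C Rb g0 phi z mu) ->
  'D_(delta_mx 0 j) (hdual Zs C Rb g0 phi) mu = gfun Rb g0 z0 0 j - phi * mu 0 j.
Proof.
move=> sc0 hf phi0 Z0 gr.
have zmin z : inZ Zs z -> Lagr C Rb g0 phi z0 mu <= Lagr C Rb g0 phi z mu.
  move=> Zz; apply: le_trans (gr z Zz); rewrite lerDl.
  by apply: mulr_ge0; [lra | apply: zdist2_ge0].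
set a := gfun Rb g0 z0 0 j - phi * mu 0 j.
set h := hdual Zs C Rb g0 phi.
have h0 : h mu = Lagr C Rb g0 phi z0 mu by apply: hdual_at.
set B := phi / 2 + sg ^+ 2 / (2 * sc).
have B0 : 0 <= B.
  by apply: addr_ge0; [lra | apply: divr_ge0; [apply: sqr_ge0 | lra]].
have bnd (t : R) : `|h (t *: delta_mx 0 j + mu) - h mu - t * a| <= B * t ^+ 2.
  pose S := [set y | exists2 z, inZ Zs z & y = Lagr C Rb g0 phi z (t *: delta_mx 0 j + mu)].
  have Sy : S (Lagr C Rb g0 phi z0 (t *: delta_mx 0 j + mu)) by exists z0.
  have lb : forall y, S y -> Lagr C Rb g0 phi z0 mu + t * a - B * t ^+ 2 <= y.
    move=> y [z Zz ->]; rewrite Lagr_shift.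
    have cb := cross_bound _ _ t z z0 j sc0 hf.
    have g := gr z Zz.
    have eB : B * t ^+ 2 = phi / 2 * t ^+ 2 + t ^+ 2 * sg ^+ 2 / (2 * sc).
      by rewrite /B; field; lra.
    rewrite eB /a.
    move: cb g; set X := t ^+ 2 * sg ^+ 2 / (2 * sc).
    set Gz := gfun Rb g0 z 0 j; set Gz0 := gfun Rb g0 z0 0 j.
    set D := zdist2 z z0.
    move=> cb g.
    have -> : t * (Gz0 - phi * mu 0 j) = t * Gz0 - phi * t * mu 0 j by ring.
    have e2 : t * (Gz - Gz0) = t * Gz - t * Gz0 by ring.
    lra.
  have [lo up] := @inf_sandwich S _ _ Sy lb.
  rewrite Lagr_shift in up.
  have hS : h (t *: delta_mx 0 j + mu) = inf S by [].
  rewrite hS h0.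
  have t2 : 0 <= t ^+ 2 by apply: sqr_ge0.
  have p1 : phi / 2 * t ^+ 2 <= B * t ^+ 2.
    by apply: ler_wpM2r => //; rewrite /B lerDl; apply: divr_ge0; [apply: sqr_ge0 | lra].
  have p2 : 0 <= phi / 2 * t ^+ 2 by apply: mulr_ge0 => //; lra.
  have e3 : t * a = t * gfun Rb g0 z0 0 j - phi * t * mu 0 j by rewrite /a; ring.
  rewrite ler_norml; apply/andP; split; lra.
rewrite /derive; apply: cvg_lim => //.
apply/cvgrPdist_le => eps eps0.
near=> t.
have tn0 : t != 0 by near: t; exact: nbhs_dnbhs_neq.
have tlt : `|t| < eps / (B + 1).
  near: t; apply: dnbhs0_lt; apply: divr_gt0 => //; lra.
rewrite /= /GRing.scale /=.
set D := h (t *: delta_mx 0 j + mu) - h mu.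
have E : a - t^-1 * D = - (t^-1 * (D - t * a)) by field.
rewrite E normrN normrM normrV ?unitfE //.
have tp : 0 < `|t| by rewrite normr_gt0.
rewrite mulrC -/(_ / _) ler_pdivrMr //.
have := bnd t; rewrite -/D => hb.
have t2e : t ^+ 2 = `|t| ^+ 2 by rewrite real_normK ?num_real.
rewrite t2e in hb.
have : `|t| * (B + 1) < eps by rewrite -ltr_pdivlMr //; lra.
nra.
Unshelve. all: by end_near.
Qed.
End Growth.

Section Aux.
Variable R : realType.

Lemma projpos_nonneg k (v : 'rV[R]_k) : nonneg (projpos v).
Proof. by move=> j; rewrite mxE le_max lexx orbT. Qed.

Lemma max0_lip (a b : R) : (Num.max a 0 - Num.max b 0) ^+ 2 <= (a - b) ^+ 2.
Proof.
rewrite !maxEle.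
case: (lerP a 0) => ha; case: (lerP b 0) => hb.
- by rewrite subrr expr2 mul0r sqr_ge0.
all: rewrite ?subr0 ?sub0r ?sqrrN !expr2; nra.
Qed.

Lemma proj_nonexp k (u v : 'rV[R]_k) :
  sqnorm (projpos u - projpos v) <= sqnorm (u - v).
Proof. by apply: ler_sum => j _; rewrite !mxE; apply: max0_lip. Qed.

Lemma discr (A B W : R) : 0 <= A ->
  (forall l : R, 2 * l * W <= l ^+ 2 * A + B) -> W ^+ 2 <= A * B.
Proof.
move=> A0 h.
have [Ae|An0] := eqVneq A 0.
  rewrite Ae in h *.
  have W0 : W = 0.
    apply/eqP; apply/negPn/negP => Wn0.
    have := h ((B + 1) / W).
    have -> : 2 * ((B + 1) / W) * W = 2 * (B + 1) by field.
    have B0 : 0 <= B by have := h 0; rewrite expr2 !mulr0 !mul0r add0r.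
    rewrite mulr0 add0r; lra.
  by rewrite W0 mul0r expr0n /=.
have Ap : 0 < A by rewrite lt_def An0 A0.
have := h (W / A).
have -> : (W / A) ^+ 2 * A = W ^+ 2 / A by field.
have -> : 2 * (W / A) * W = 2 * (W ^+ 2 / A) by field.
move=> hh.
have : W ^+ 2 / A <= B by lra.
by rewrite ler_pdivrMr // mulrC.
Qed.
End Aux.

Section Main.
Variables (R : realType) (N : nat) (ns : 'I_N -> nat) (m : nat)
  (Zs : forall i : 'I_N, set 'rV[R]_(ns i))
  (C : forall i : 'I_N, 'rV[R]_(ns i) -> R)
  (Rb : forall i : 'I_N, 'M[R]_(ns i, m)) (g0 : 'rV[R]_m) (phi : R).

Lemma fixpt (eps : R) (zs : blockvec R ns) (mus : 'rV[R]_m) :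
  0 < eps -> 0 < phi -> nonneg mus ->
  (forall mu, nonneg mu -> Lagr C Rb g0 phi zs mu <= Lagr C Rb g0 phi zs mus) ->
  projpos (mus + eps *: (gfun Rb g0 zs - phi *: mus)) = mus.
Proof.
move=> e0 p0 nnm hmax; apply/rowP => j.
pose GG := gfun Rb g0 zs.
have EG : gfun Rb g0 zs = GG by [].
rewrite EG; clearbody GG.
rewrite !mxE.
set G := GG 0 j.
set a := G - phi * mus 0 j.
have test (s : R) : - mus 0 j <= s -> s * a - phi / 2 * s ^+ 2 <= 0.
  move=> hs.
  have nn : nonneg (s *: delta_mx 0 j + mus).
    move=> k; rewrite !mxE eqxx /=; have [<-|jk] := eqVneq j k.
      by rewrite mulr1; lra.
    by rewrite mulr0 add0r; apply: nnm.
  have := hmax _ nn; rewrite Lagr_shift EG -/G.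
  have -> : s * a = s * G - phi * s * mus 0 j by rewrite /a; ring.
  lra.
have m0 := nnm j.
have a_le : a <= 0.
  rewrite leNgt; apply/negP => ap.
  have := test (a / phi).
  have -> : - mus 0 j <= a / phi.
    by apply: le_trans (_ : 0 <= a / phi); [lra | apply: divr_ge0; lra].
  move=> /(_ isT).
  have -> : a / phi * a - phi / 2 * (a / phi) ^+ 2 = a ^+ 2 / (2 * phi) by field; lra.
  have : 0 < a ^+ 2 / (2 * phi) by apply: divr_gt0; [apply: exprn_gt0 | lra].
  lra.
have [mz|mpos] := eqVneq (mus 0 j) 0.
  rewrite mz add0r maxEle.
  have -> : eps * a <= 0 by apply: mulr_ge0_le0 => //; lra.
  by [].
have mp : 0 < mus 0 j by rewrite lt_def mpos m0.
have a0 : a = 0.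
  apply/eqP; rewrite eq_le a_le /=; rewrite leNgt; apply/negP => an.
  set s := Num.max (- mus 0 j) (a / phi).
  have s1 : - mus 0 j <= s by rewrite le_max lexx.
  have s2 : a / phi <= s by rewrite le_max lexx orbT.
  have sn : s < 0.
    rewrite /s maxEle; case: ifP => _; last lra.
    by rewrite pmulr_llt0 ?invr_gt0.
  have ht := test s s1.
  have s3 : a <= phi * s by rewrite -ler_pdivrMl // mulrC.
  nra.
rewrite a0 mulr0 addr0 maxEle.
by case: ifP => // h; apply/eqP; rewrite eq_le h m0.
Qed.


Lemma mxBE k (A B : 'rV[R]_k) j : (A - B) 0 j = A 0 j - B 0 j.
Proof. by rewrite !mxE. Qed.

Lemma dotrBl k (x y g : 'rV[R]_k) : dotr (x - y) g = dotr x g - dotr y g.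
Proof. by rewrite /dotr -sumrB; apply: eq_bigr => j _; rewrite !mxE mulrBl. Qed.

Lemma dotrC k (x y : 'rV[R]_k) : dotr x y = dotr y x.
Proof. by apply: eq_bigr => j _; rewrite mulrC. Qed.

Lemma dotrN k (x y : 'rV[R]_k) : dotr x (- y) = - dotr x y.
Proof. by rewrite /dotr -sumrN; apply: eq_bigr => j _; rewrite !mxE mulrN. Qed.

Lemma sqnormDZ k (d q : 'rV[R]_k) (e : R) :
  sqnorm (d + e *: q) = sqnorm d + 2 * e * dotr d q + e ^+ 2 * sqnorm q.
Proof.
rewrite /sqnorm /dotr !mulr_sumr -!big_split /=.
by apply: eq_bigr => j _; rewrite !mxE; ring.
Qed.

Lemma sqnorm_ge0 k (d : 'rV[R]_k) : 0 <= sqnorm d.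
Proof. by apply: sumr_ge0 => j _; apply: sqr_ge0. Qed.

Lemma zdist2C (a b : blockvec R ns) : zdist2 a b = zdist2 b a.
Proof.
apply: eq_bigr => i _; apply: eq_bigr => j _.
by rewrite !mxE -sqrrN opprB.
Qed.

Lemma Lagr_cross (a b : blockvec R ns) (mu1 mu2 : 'rV[R]_m) :
  Lagr C Rb g0 phi a mu1 - Lagr C Rb g0 phi b mu1 +
  (Lagr C Rb g0 phi b mu2 - Lagr C Rb g0 phi a mu2) =
  dotr (mu1 - mu2) (gfun Rb g0 a - gfun Rb g0 b).
Proof.
rewrite dotrBl -!dotrB /Lagr.
ring.
Qed.

Lemma frob_sq (sg : R) : frobR Rb <= sg -> \sum_i frob2 (Rb i) <= sg ^+ 2.
Proof.
move=> hf.
have S0 : 0 <= \sum_(i < N) frob2 (Rb i).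
  by apply: sumr_ge0 => i _; apply: sumr_ge0 => a _; apply: sumr_ge0 => b _; apply: sqr_ge0.
rewrite -(sqr_sqrtr S0).
have s0 : 0 <= Num.sqrt (\sum_(i < N) frob2 (Rb i)) by apply: sqrtr_ge0.
move: hf; rewrite /frobR => hf.
nra.
Qed.

Lemma P_bound k (d w : 'rV[R]_k) : dotr d w ^+ 2 <= sqnorm d * sqnorm w.
Proof.
apply: discr; first exact: sqnorm_ge0.
move=> l; rewrite /dotr /sqnorm !mulr_sumr -big_split /=.
apply: ler_sum => j _.
have := sqr_ge0 (l * d 0 j - w 0 j); nra.
Qed.

Lemma W_bound (sg : R) (z z0 : blockvec R ns) : frobR Rb <= sg ->
  sqnorm (gfun Rb g0 z - gfun Rb g0 z0) <= sg ^+ 2 * zdist2 z z0.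
Proof.
move=> hf.
pose F j := \sum_i \sum_(k < ns i) Rb i k j ^+ 2.
have hj j : (gfun Rb g0 z - gfun Rb g0 z0) 0 j ^+ 2 <= zdist2 z z0 * F j.
  rewrite mxBE gfun_diff; apply: discr; first exact: zdist2_ge0.
  move=> l; rewrite /zdist2 /sqnorm /F !mulr_sumr -big_split /=.
  apply: ler_sum => i _; rewrite !mulr_sumr -big_split /=.
  apply: ler_sum => k _.
  have := sqr_ge0 (l * (z i - z0 i) 0 k - Rb i k j); nra.
apply: (@le_trans _ _ (\sum_j zdist2 z z0 * F j)); first by apply: ler_sum => j _; apply: hj.
rewrite -mulr_sumr mulrC; apply: ler_wpM2r; first exact: zdist2_ge0.
apply: le_trans (frob_sq _ hf).
rewrite /F exchange_big /=; apply: ler_sum => i _.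
by rewrite exchange_big /=.
Qed.

Lemma grad_h (sc sg : R) (mu : 'rV[R]_m) (z0 : blockvec R ns) :
  0 < sc -> frobR Rb <= sg -> 0 <= phi -> inZ Zs z0 ->
  (forall z, inZ Zs z -> Lagr C Rb g0 phi z0 mu + sc / 2 * zdist2 z z0 <= Lagr C Rb g0 phi z mu) ->
  grad (hdual Zs C Rb g0 phi) mu = gfun Rb g0 z0 - phi *: mu.
Proof.
move=> sc0 hf p0 Z0 gr; apply/rowP => j.
rewrite mxBE [(phi *: mu) 0 j]mxE [LHS]mxE.
exact: (@hdual_derive R N ns m Zs C Rb g0 phi sc sg mu z0 j sc0 hf p0 Z0 gr).
Qed.

Lemma step (sc sg sh eps : R) (mu1 mus : 'rV[R]_m) (z1 zs : blockvec R ns) :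
  0 < sc -> frobR Rb <= sg -> 0 < phi -> 0 < eps ->
  inZ Zs z1 -> inZ Zs zs ->
  (forall z, inZ Zs z -> Lagr C Rb g0 phi z1 mu1 + sc / 2 * zdist2 z z1 <= Lagr C Rb g0 phi z mu1) ->
  (forall z, inZ Zs z -> Lagr C Rb g0 phi zs mus + sc / 2 * zdist2 z zs <= Lagr C Rb g0 phi z mus) ->
  dotr (grad (hdual Zs C Rb g0 phi) mu1 - grad (hdual Zs C Rb g0 phi) mus) (mu1 - mus)
     <= - sh * sqnorm (mu1 - mus) ->
  projpos (mus + eps *: (gfun Rb g0 zs - phi *: mus)) = mus ->
  sqnorm (projpos (mu1 + eps *: (gfun Rb g0 z1 - phi *: mu1)) - mus)
    <= (1 - 2 * eps * sh + eps ^+ 2 * (sg ^+ 2 / sc + phi) ^+ 2) * sqnorm (mu1 - mus)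
  /\ zdist2 z1 zs <= sg ^+ 2 / sc ^+ 2 * sqnorm (mu1 - mus).
Proof.
move=> sc0 hf p0 e0 Z1 Zs' g1 gs hgrad fx.
rewrite (@grad_h sc sg mu1 z1 sc0 hf (ltW p0) Z1 g1) (@grad_h sc sg mus zs sc0 hf (ltW p0) Zs' gs) in hgrad.
set d := mu1 - mus.
set w := gfun Rb g0 z1 - gfun Rb g0 zs.
have eq1 : gfun Rb g0 z1 - phi *: mu1 - (gfun Rb g0 zs - phi *: mus) = w + (- phi) *: d.
  by apply/rowP => j; rewrite !mxE; ring.
rewrite eq1 in hgrad.
set q := w + (- phi) *: d.
have hp : sqnorm (projpos (mu1 + eps *: (gfun Rb g0 z1 - phi *: mu1)) - mus) <= sqnorm (d + eps *: q).
  rewrite -{1}fx.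
  apply: le_trans (proj_nonexp _ _ _ _) _.
  have -> : mu1 + eps *: (gfun Rb g0 z1 - phi *: mu1) - (mus + eps *: (gfun Rb g0 zs - phi *: mus))
     = d + eps *: q.
    by apply/rowP => j; rewrite !mxE; ring.
  by [].
rewrite sqnormDZ in hp.
have hq : sqnorm q = sqnorm w + 2 * (- phi) * dotr w d + phi ^+ 2 * sqnorm d.
  by rewrite /q sqnormDZ sqrrN.
set D := sqnorm d.
set Dz := zdist2 z1 zs.
set W := sqnorm w.
set P := dotr d w.
have D0 : 0 <= D by apply: sqnorm_ge0.
have Dz0 : 0 <= Dz by apply: zdist2_ge0.
have W0 : 0 <= W by apply: sqnorm_ge0.
have h1 : sc * Dz <= - P.
  have a1 := g1 zs Zs'.
  have a2 := gs z1 Z1.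
  have := Lagr_cross zs z1 mu1 mus.
  rewrite -/d.
  have -> : gfun Rb g0 zs - gfun Rb g0 z1 = - w by rewrite opprB.
  rewrite dotrN -/P zdist2C -/Dz in a1 *.
  move=> e; rewrite -/Dz in a2; lra.
have h2 : W <= sg ^+ 2 * Dz by apply: W_bound.
have h3 : P ^+ 2 <= D * W by apply: P_bound.
set X := sg ^+ 2 / sc.
have sgX : sg ^+ 2 = X * sc by rewrite /X divfK // gt_eqF.
have h4 : sc * Dz <= X * D.
  have [Dz_0|Dzp] := eqVneq Dz 0.
    rewrite Dz_0 mulr0; apply: mulr_ge0 => //; rewrite /X divr_ge0 ?sqr_ge0 //; lra.
  have Dzp' : 0 < Dz by rewrite lt_def Dzp Dz0.
  have : (sc * Dz) * (sc * Dz) <= (X * D) * (sc * Dz).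
    have : (sc * Dz) ^+ 2 <= P ^+ 2.
      have hh : 0 <= sc * Dz by apply: mulr_ge0; lra.
      nra.
    rewrite sgX in h2.
    nra.
  rewrite ler_pM2r //; apply: mulr_gt0 => //.
have X0 : 0 <= X by rewrite /X divr_ge0 ?sqr_ge0 //; lra.
have h5 : W <= X ^+ 2 * D.
  rewrite sgX in h2; nra.
have h6 : - P <= X * D.
  have : P ^+ 2 <= (X * D) ^+ 2 by nra.
  have : 0 <= - P by nra.
  have XD0 : 0 <= X * D by apply: mulr_ge0.
  move: XD0; set Y := X * D => XD0 hP hP2.
  rewrite leNgt; apply/negP => hlt.
  have : Y * Y < (- P) * (- P).
    apply: le_lt_trans (_ : Y * (- P) < _).
      by apply: ler_wpM2l => //; apply: ltW.
    have Pp : 0 < - P by apply: le_lt_trans hlt.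
    by rewrite ltr_pM2r.
  rewrite mulrNN -!expr2; lra.
have hq2 : sqnorm q <= (X + phi) ^+ 2 * D.
  rewrite hq dotrC -/P.
  have : phi * (- P) <= phi * (X * D) by apply: ler_wpM2l => //; lra.
  have -> : (X + phi) ^+ 2 * D = X ^+ 2 * D + 2 * (phi * (X * D)) + phi ^+ 2 * D by ring.
  have -> : W + 2 * - phi * P + phi ^+ 2 * D = W + 2 * (phi * (- P)) + phi ^+ 2 * D by ring.
  lra.
split.
  apply: le_trans hp _.
  rewrite dotrC in hgrad.
  have : eps * dotr d q <= eps * (- sh * D) by apply: ler_wpM2l => //; lra.
  have : eps ^+ 2 * sqnorm q <= eps ^+ 2 * ((X + phi) ^+ 2 * D).
    by apply: ler_wpM2l => //; apply: sqr_ge0.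
  move=> a b.
  have -> : (1 - 2 * eps * sh + eps ^+ 2 * (X + phi) ^+ 2) * D =
     D + 2 * (eps * (- sh * D)) + eps ^+ 2 * ((X + phi) ^+ 2 * D) by ring.
  rewrite -/D.
  have -> : 2 * eps * dotr d q = 2 * (eps * dotr d q) by ring.
  lra.
rewrite -/d -/D -/Dz.
have -> : sg ^+ 2 / sc ^+ 2 * D = X * D / sc by rewrite /X; field; lra.
by rewrite ler_pdivlMr // mulrC.
Qed.

End Main.


Lemma aux_eq (R : realType) (a b x y : R) : x != 0 -> a * b / x * (x * y) = a * (b * y).
Proof. by move=> h; field. Qed.

Lemma geo0 (R : realType) (u : nat -> R) (c r : R) (n0 : nat) : 0 <= r < 1 ->
  (forall k, 0 <= u k) -> (forall k, (n0 <= k)%N -> u k <= c * r ^+ k) ->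
  u @ \oo --> (0 : R).
Proof.
move=> /andP[r0 r1] u0 ub.
apply: (@squeeze_cvgr _ _ _ _ (fun _ => 0) (geometric c r)).
- near=> k; rewrite u0 /=.
  rewrite /geometric /=; apply: ub.
  by near: k; exists n0.
- exact: cvg_cst.
- by apply: cvg_geometric; rewrite ger0_norm.
Unshelve. all: by end_near.
Qed.

Theorem corollary1 (R : realType) (N : nat) (ns : 'I_N -> nat) (m : nat)
  (Zs : forall i : 'I_N, set 'rV[R]_(ns i))
  (C : forall i : 'I_N, 'rV[R]_(ns i) -> R)
  (Rb : forall i : 'I_N, 'M[R]_(ns i, m)) (g0 : 'rV[R]_m)
  (sc sg phi sh eps : R)
  (zstar : blockvec R ns) (mustar : 'rV[R]_m)
  (z : nat -> blockvec R ns) (mu : nat -> 'rV[R]_m) :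
  (forall i, Zs i !=set0) ->
  (forall i, cvxset (Zs i)) ->
  (forall i, compact (Zs i)) ->
  0 < sc ->
  (forall i, twice_diff_on (Zs i) (C i)) ->
  (forall i, hess_ge (Zs i) (C i) sc) ->
  (forall i, lip_grad_on (Zs i) (C i)) ->
  0 < sg -> frobR Rb <= sg ->
  slater Zs Rb g0 ->
  0 < phi ->
  saddle Zs C Rb g0 phi zstar mustar ->
  0 < sh ->
  (forall mu1 mu2 : 'rV[R]_m, nonneg mu1 -> nonneg mu2 ->
     dotr (grad (hdual Zs C Rb g0 phi) mu1 - grad (hdual Zs C Rb g0 phi) mu2)
          (mu1 - mu2) <= - sh * sqnorm (mu1 - mu2)) ->
  nonneg (mu 1%N) ->
  (forall k, (1 <= k)%N ->
     inZ Zs (z k.+1) /\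
     forall z', inZ Zs z' ->
       Lagr C Rb g0 phi (z k.+1) (mu k) <= Lagr C Rb g0 phi z' (mu k)) ->
  (forall k, (1 <= k)%N ->
     mu k.+1 = projpos (mu k + eps *: (gfun Rb g0 (z k.+1) - phi *: mu k))) ->
  0 < eps < 2 * sh / (sg ^+ 2 / sc + phi) ^+ 2 ->
  (fun k => sqnorm (mu k - mustar)) @ \oo --> (0 : R) /\
  (fun k => zdist2 (z k) zstar) @ \oo --> (0 : R).
Proof.
move=> Zne cvx cpt sc0 td hg hl sg0 hf sl p0 sad sh0 hgr mu1nn zk muk /andP[e0 eb].
case: sad => Zst nnst sadh.
have zmins : forall z', inZ Zs z' -> Lagr C Rb g0 phi zstar mustar <= Lagr C Rb g0 phi z' mustar.
  by move=> z' Zz; have [] := sadh z' mustar Zz nnst.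
have grs := @growth R N ns m Zs C Rb g0 phi sc cvx td hg mustar zstar Zst zmins.
have grk k : (1 <= k)%N -> forall z', inZ Zs z' ->
    Lagr C Rb g0 phi (z k.+1) (mu k) + sc / 2 * zdist2 z' (z k.+1) <= Lagr C Rb g0 phi z' (mu k).
  move=> k1; have [Zk zmin] := zk k k1.
  exact: (@growth R N ns m Zs C Rb g0 phi sc cvx td hg (mu k) (z k.+1) Zk zmin).
have fx : projpos (mustar + eps *: (gfun Rb g0 zstar - phi *: mustar)) = mustar.
  apply: (@fixpt R N ns m C Rb g0 phi eps zstar mustar e0 p0 nnst).
  by move=> mu' nn'; have [] := sadh zstar mu' Zst nn'.
have nn k : (1 <= k)%N -> nonneg (mu k).
  case: k => [//|k] k1.
  case: k k1 => [_|k k1]; first exact: mu1nn.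
  rewrite muk //; exact: projpos_nonneg.
set L := (sg ^+ 2 / sc + phi) ^+ 2.
set rho := 1 - 2 * eps * sh + eps ^+ 2 * L.
have st k : (1 <= k)%N ->
    sqnorm (mu k.+1 - mustar) <= rho * sqnorm (mu k - mustar) /\
    zdist2 (z k.+1) zstar <= sg ^+ 2 / sc ^+ 2 * sqnorm (mu k - mustar).
  move=> k1; rewrite muk //.
  have [Zk _] := zk k k1.
  exact: (@step R N ns m Zs C Rb g0 phi sc sg sh eps (mu k) mustar (z k.+1) zstar
     sc0 hf p0 e0 Zk Zst (grk k k1) grs (hgr _ _ (nn k k1) nnst) fx).
have L0 : 0 < L.
  rewrite /L; apply: exprn_gt0; apply: addr_gt0 => //; apply: divr_gt0 => //.
  by apply: exprn_gt0.
have rho1 : rho < 1.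
  have : eps * L < 2 * sh by rewrite -ltr_pdivlMr // mulrC.
  move=> h; have : eps * (eps * L) < eps * (2 * sh) by rewrite ltr_pM2l.
  rewrite /rho; lra.
set r := (Num.max rho 0 + 1) / 2.
have mx1 : Num.max rho 0 < 1 by rewrite gt_max rho1 ltr01.
have mx0 : 0 <= Num.max rho 0 by rewrite le_max lexx orbT.
have r0 : 0 < r by rewrite /r; lra.
have r1 : r < 1 by rewrite /r; lra.
have rm : rho <= Num.max rho 0 by rewrite le_max lexx.
have rr : rho <= r by rewrite /r; lra.
set D1 := sqnorm (mu 1%N - mustar).
have Dk k : (1 <= k)%N -> sqnorm (mu k - mustar) <= D1 / r * r ^+ k.
  elim: k => // k IH k1.
  have [k0|kp] := eqVneq k 0%N.
    by rewrite k0 expr1 divfK ?gt_eqF // /D1.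
  have k1' : (1 <= k)%N by rewrite lt0n.
  have [h _] := st k k1'.
  apply: le_trans h _.
  apply: (@le_trans _ _ (r * sqnorm (mu k - mustar))).
    by apply: ler_wpM2r => //; apply: sqnorm_ge0.
  rewrite exprS mulrCA; apply: ler_wpM2l; first lra.
  exact: IH.
split.
  apply: (@geo0 R _ (D1 / r) r 1%N); first by rewrite (ltW r0) r1.
    by move=> k; apply: sqnorm_ge0.
  exact: Dk.
apply: (@geo0 R _ (sg ^+ 2 / sc ^+ 2 * (D1 / r) / r) r 2%N); first by rewrite (ltW r0) r1.
  by move=> k; apply: zdist2_ge0.
case => // k k2.
have k1 : (1 <= k)%N by [].
have [_ h] := st k k1.
apply: le_trans h _.
have cz : 0 <= sg ^+ 2 / sc ^+ 2 by apply: divr_ge0; apply: sqr_ge0.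
have -> : sg ^+ 2 / sc ^+ 2 * (D1 / r) / r * r ^+ k.+1 = sg ^+ 2 / sc ^+ 2 * (D1 / r * r ^+ k).
  by rewrite [r ^+ k.+1]exprS; apply: aux_eq; rewrite gt_eqF.
apply: ler_wpM2l => //.
exact: Dk.
Qed.
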